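(* Let $E$ be a Fréchet space, $E^*$ its topological dual with the weak$^*$ topology, $J=[a,b]$ with $a<b$, and $f:J\to E^*$ continuous. Then $$\int_a^b f(t)(\mu'(t))\,dt=0$$ for every $\mu\in C^1(J,E)$ with $\mu(a)=\mu(b)=0$ if and only if $f$ is constant on $J$.
   Context: $C^1(J,E)$ denotes continuously differentiable curves $J\to E$ (one-sided derivatives at the endpoints). The integrals are ordinary Lebesgue integrals of continuous real functions; integrals of $E^*$-valued continuous functions are understood in the weak sense: $\int_a^b f\,dt$ is the element $l\in E^*$ with $l(e)=\int_a^b f(t)(e)\,dt$ for all $e\in E$. *)

(* Defs.v *)
From Stdlib Require Import Reals Lra ClassicalEpsilon ClassicalDescription.
Open Scope R_scope.

(* A Frechet space over R: a real vector space with a countable separating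
   family of seminorms (p_n), complete for the induced (metrizable, locally
   convex) topology: every sequence that is Cauchy for every p_n converges
   for every p_n. *)
Record FrechetSpace := {
  fs_car :> Type;
  fs_zero : fs_car;
  fs_add : fs_car -> fs_car -> fs_car;
  fs_opp : fs_car -> fs_car;
  fs_scal : R -> fs_car -> fs_car;
  fs_add_assoc : forall x y z, fs_add x (fs_add y z) = fs_add (fs_add x y) z;
  fs_add_comm : forall x y, fs_add x y = fs_add y x;
  fs_add_zero : forall x, fs_add x fs_zero = x;
  fs_add_opp : forall x, fs_add x (fs_opp x) = fs_zero;
  fs_scal_assoc : forall c d x, fs_scal c (fs_scal d x) = fs_scal (c * d) x;
  fs_scal_one : forall x, fs_scal 1 x = x;
  fs_scal_distr_l : forall c x y, fs_scal c (fs_add x y) = fs_add (fs_scal c x) (fs_scal c y);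
  fs_scal_distr_r : forall c d x, fs_scal (c + d) x = fs_add (fs_scal c x) (fs_scal d x);
  fs_sn : nat -> fs_car -> R;
  fs_sn_nonneg : forall n x, 0 <= fs_sn n x;
  fs_sn_triangle : forall n x y, fs_sn n (fs_add x y) <= fs_sn n x + fs_sn n y;
  fs_sn_homog : forall n c x, fs_sn n (fs_scal c x) = Rabs c * fs_sn n x;
  fs_sn_sep : forall x, (forall n, fs_sn n x = 0) -> x = fs_zero;
  fs_complete : forall u : nat -> fs_car,
    (forall n eps, eps > 0 -> exists N, forall i j, (i >= N)%nat -> (j >= N)%nat ->
        fs_sn n (fs_add (u i) (fs_opp (u j))) < eps) ->
    exists x, forall n eps, eps > 0 -> exists N, forall i, (i >= N)%nat ->
        fs_sn n (fs_add (u i) (fs_opp x)) < eps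
}.

Arguments fs_zero {f}.
Arguments fs_add {f}.
Arguments fs_opp {f}.
Arguments fs_scal {f}.
Arguments fs_sn {f}.

Definition fs_sub {E : FrechetSpace} (x y : E) : E := fs_add x (fs_opp y).

Definition fs_continuous (E : FrechetSpace) (g : E -> R) : Prop :=
  forall x eps, eps > 0 -> exists (N : nat) (delta : R), delta > 0 /\
    forall y, (forall n, (n <= N)%nat -> fs_sn n (fs_sub y x) < delta) ->
      Rabs (g y - g x) < eps.

Definition is_linear (E : FrechetSpace) (l : E -> R) : Prop :=
  (forall x y, l (fs_add x y) = l x + l y) /\
  (forall c x, l (fs_scal c x) = c * l x).

Definition in_dual (E : FrechetSpace) (l : E -> R) : Prop :=
  is_linear E l /\ fs_continuous E l.

(* f : J -> E^* is continuous for the weak-* topology: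
   t |-> f t e is continuous on J = [a,b] for every e. *)
Definition weak_star_continuous_on (E : FrechetSpace) (f : R -> E -> R) (a b : R) : Prop :=
  forall (e : E) t, a <= t <= b -> forall eps, eps > 0 -> exists delta, delta > 0 /\
    forall s, a <= s <= b -> Rabs (s - t) < delta -> Rabs (f s e - f t e) < eps.

(* mu' is the derivative of mu on J = [a,b] (one-sided at the endpoints),
   in the topology of E. *)
Definition has_derivative_on (E : FrechetSpace) (mu mu' : R -> E) (a b : R) : Prop :=
  forall t, a <= t <= b -> forall n eps, eps > 0 -> exists delta, delta > 0 /\
    forall s, a <= s <= b -> s <> t -> Rabs (s - t) < delta ->
      fs_sn n (fs_sub (fs_scal (/ (s - t)) (fs_sub (mu s) (mu t))) (mu' t)) < eps.

Definition curve_continuous_on (E : FrechetSpace) (nu : R -> E) (a b : R) : Prop :=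
  forall t, a <= t <= b -> forall n eps, eps > 0 -> exists delta, delta > 0 /\
    forall s, a <= s <= b -> Rabs (s - t) < delta -> fs_sn n (fs_sub (nu s) (nu t)) < eps.

Definition is_C1_on (E : FrechetSpace) (mu mu' : R -> E) (a b : R) : Prop :=
  has_derivative_on E mu mu' a b /\ curve_continuous_on E mu' a b.

(* Total Riemann integral: the Riemann integral when g is Riemann integrable
   on [a,b] (value independent of the proof), 0 otherwise. *)
Definition Rint (g : R -> R) (a b : R) : R :=
  match excluded_middle_informative (inhabited (Riemann_integrable g a b)) with
  | left H => RiemannInt (epsilon H (fun _ => True))
  | right _ => 0
  end.

(* Main.v *)
Require Import Defs.
From Stdlib Require Import Reals.
From Stdlib Require Import Lra Lia ClassicalEpsilon ClassicalDescription.
From Coquelicot Require Import Coquelicot.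
Open Scope R_scope.

Definition clamp (a b x : R) := Rmax a (Rmin b x).

Lemma clamp_in a b x : a <= b -> a <= clamp a b x <= b.
Proof. intro. unfold clamp, Rmax, Rmin. repeat destruct Rle_dec; lra. Qed.
Lemma clamp_id a b x : a <= x <= b -> clamp a b x = x.
Proof. intro. unfold clamp, Rmax, Rmin. repeat destruct Rle_dec; lra. Qed.
Lemma clamp_lip a b x y : a <= b -> Rabs (clamp a b y - clamp a b x) <= Rabs (y - x).
Proof. intro. unfold clamp, Rmax, Rmin, Rabs. repeat destruct Rle_dec; repeat destruct Rcase_abs; lra. Qed.

Definition wcont (h : R -> R) a b := forall t, a <= t <= b -> forall eps, eps > 0 ->
  exists delta, delta > 0 /\ forall s, a <= s <= b -> Rabs (s - t) < delta -> Rabs (h s - h t) < eps.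

Definition wderiv (G h : R -> R) a b := forall t, a <= t <= b -> forall eps, eps > 0 ->
  exists delta, delta > 0 /\ forall s, a <= s <= b -> Rabs (s - t) < delta ->
    Rabs (G s - G t - h t * (s - t)) <= eps * Rabs (s - t).

Lemma wcont_clamp h a b : a <= b -> wcont h a b -> forall x, continuity_pt (fun t => h (clamp a b t)) x.
Proof.
  intros Hab Hc x eps Heps.
  destruct (Hc (clamp a b x) (clamp_in a b x Hab) eps Heps) as [d [Hd H]].
  exists d; split; [lra|]. intros y [_ Hy]. simpl in *. unfold R_dist in *.
  apply H. apply clamp_in; lra. pose proof (clamp_lip a b x y Hab). lra.
Qed.

Lemma zero_deriv (psi : R -> R) a b : a < b ->
  (forall t, a <= t <= b -> forall eps, eps > 0 ->
  exists delta, delta > 0 /\ forall s, a <= s <= b -> Rabs (s - t) < delta ->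
    Rabs (psi s - psi t) <= eps * Rabs (s - t)) -> psi b = psi a.
Proof.
  intros Hab Hd.
  assert (Key : forall eps, eps > 0 -> Rabs (psi b - psi a) <= eps * (b - a)).
  { intros eps Heps.
    set (S := fun x => a <= x <= b /\ forall y, a <= y <= x -> Rabs (psi y - psi a) <= eps * (y - a)).
    assert (Sa : S a).
    { split; [lra|]. intros y Hy. replace y with a by lra. rewrite Rminus_diag, Rabs_R0. lra. }
    assert (Bd : bound S) by (exists b; intros x [Hx _]; lra).
    destruct (completeness S Bd (ex_intro _ a Sa)) as [m [Hub Hlub]].
    assert (am : a <= m) by (apply Hub; auto).
    assert (mb : m <= b) by (apply Hlub; intros x [Hx _]; lra).
    assert (CA : forall y, a <= y < m -> Rabs (psi y - psi a) <= eps * (y - a)).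
    { intros y Hy. destruct (Rle_lt_dec (Rabs (psi y - psi a)) (eps * (y - a))) as [ok|ko]; auto.
      exfalso. assert (m <= y); [|lra]. apply Hlub. intros x [Hx Hx2].
      destruct (Rle_lt_dec x y); auto. pose proof (Hx2 y ltac:(lra)). lra. }
    assert (Sm : S m).
    { split; [lra|]. intros y Hy. destruct (Rlt_le_dec y m) as [l|l]; [apply CA; lra|].
      replace y with m by lra. destruct (Req_dec m a) as [e|ne].
      { subst. rewrite Rminus_diag, Rabs_R0. lra. }
      destruct (Hd m ltac:(lra) eps Heps) as [d [Hd0 Hm]].
      set (z := Rmax a (m - d/2)).
      assert (az : a <= z < m) by (unfold z, Rmax; destruct Rle_dec; lra).
      assert (mz : m - z <= d/2) by (unfold z, Rmax; destruct Rle_dec; lra).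
      pose proof (CA z az) as C1.
      assert (C2 : Rabs (psi z - psi m) <= eps * Rabs (z - m)).
      { apply Hm. lra. rewrite Rabs_left; lra. }
      rewrite (Rabs_left (z - m)) in C2 by lra.
      revert C1 C2. unfold Rabs. repeat destruct Rcase_abs; nra. }
    assert (mbe : m = b).
    { destruct (Req_dec m b) as [e|ne]; auto. exfalso.
      destruct (Hd m ltac:(lra) eps Heps) as [d [Hd0 Hm]].
      set (z := Rmin b (m + d/2)).
      assert (mz : m < z <= b) by (unfold z, Rmin; destruct Rle_dec; lra).
      assert (zm : z - m <= d/2) by (unfold z, Rmin; destruct Rle_dec; lra).
      assert (z <= m); [|lra]. apply Hub. split; [lra|]. intros y Hy.
      destruct (Rle_lt_dec y m) as [l|l]. { apply Sm. lra. }
      destruct Sm as [_ Sm]. pose proof (Sm m ltac:(lra)) as C1.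
      assert (C2 : Rabs (psi y - psi m) <= eps * Rabs (y - m)).
      { apply Hm. lra. rewrite Rabs_right; lra. }
      rewrite (Rabs_right (y - m)) in C2 by lra.
      revert C1 C2. unfold Rabs. repeat destruct Rcase_abs; nra. }
    subst m. destruct Sm as [_ Sm]. apply Sm. lra. }
  destruct (Req_dec (psi b) (psi a)) as [e|ne]; auto. exfalso.
  assert (dpos : Rabs (psi b - psi a) > 0) by (apply Rabs_pos_lt; lra).
  set (d := Rabs (psi b - psi a)) in *.
  pose proof (Key (d / (2 * (b - a))) ltac:(apply Rdiv_lt_0_compat; lra)) as K.
  replace (d / (2 * (b - a)) * (b - a)) with (d / 2) in K by (field; lra). lra.
Qed.

Lemma prim_deriv (k : R -> R) a : (forall x, continuity_pt k x) ->
  forall x, derivable_pt_lim (fun u => RInt k a u) x (k x).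
Proof.
  intros Hk x. apply is_derive_Reals.
  apply (is_derive_RInt k (fun u => RInt k a u) a x).
  - apply filter_forall. intro u. apply (RInt_correct (V:=R_CompleteNormedModule)). apply (ex_RInt_continuous (V:=R_CompleteNormedModule)).
    intros; apply continuity_pt_filterlim; auto.
  - apply continuity_pt_filterlim; auto.
Qed.

Lemma dpl_w (P : R -> R) x l : derivable_pt_lim P x l -> forall eps, eps > 0 ->
  exists delta, delta > 0 /\ forall s, Rabs (s - x) < delta ->
    Rabs (P s - P x - l * (s - x)) <= eps * Rabs (s - x).
Proof.
  intros H eps Heps. destruct (H eps Heps) as [d Hd]. exists d; split; [apply cond_pos|].
  intros s Hs. destruct (Req_dec s x) as [e|ne].
  { subst. replace (x - x) with 0 by ring. replace (P x - P x - l * 0) with 0 by ring. rewrite Rabs_R0. lra. }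
  pose proof (Hd (s - x) ltac:(lra) Hs) as K. replace (x + (s - x)) with s in K by ring.
  replace (P s - P x - l * (s - x)) with ((s - x) * ((P s - P x) / (s - x) - l)) by (field; lra).
  rewrite Rabs_mult. rewrite Rmult_comm. apply Rmult_le_compat_r. apply Rabs_pos. lra.
Qed.

Lemma wderiv_minus G1 G2 h1 h2 a b : wderiv G1 h1 a b -> wderiv G2 h2 a b ->
  wderiv (fun u => G1 u - G2 u) (fun u => h1 u - h2 u) a b.
Proof.
  intros H1 H2 t Ht eps Heps.
  destruct (H1 t Ht (eps/2) ltac:(lra)) as [d1 [Hd1 K1]].
  destruct (H2 t Ht (eps/2) ltac:(lra)) as [d2 [Hd2 K2]].
  exists (Rmin d1 d2). split. { apply Rmin_glb_lt; auto. }
  intros s Hs Hst. pose proof (Rmin_l d1 d2). pose proof (Rmin_r d1 d2).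
  specialize (K1 s Hs ltac:(lra)). specialize (K2 s Hs ltac:(lra)).
  replace (G1 s - G2 s - (G1 t - G2 t) - (h1 t - h2 t) * (s - t))
    with ((G1 s - G1 t - h1 t * (s - t)) - (G2 s - G2 t - h2 t * (s - t))) by ring.
  eapply Rle_trans. apply Rabs_triang. rewrite Rabs_Ropp. lra.
Qed.

Lemma Rint_RInt h a b : ex_RInt h a b -> Rint h a b = RInt h a b.
Proof.
  intro H. unfold Rint. destruct excluded_middle_informative as [i|n].
  - rewrite (RInt_Reals h a b (ClassicalEpsilon.epsilon i (fun _ => True))). reflexivity.
  - exfalso. apply n. constructor. apply ex_RInt_Reals_0. auto.
Qed.

Lemma FTC h G a b : a < b -> wcont h a b -> wderiv G h a b ->
  ex_RInt h a b /\ RInt h a b = G b - G a.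
Proof.
  intros Hab Hc Hd.
  set (k := fun x => h (clamp a b x)).
  assert (kc : forall x, continuity_pt k x) by (apply wcont_clamp; auto; lra).
  assert (kh : forall x, a <= x <= b -> k x = h x) by (intros; unfold k; rewrite clamp_id; auto).
  assert (Ek : ex_RInt k a b).
  { apply (ex_RInt_continuous (V:=R_CompleteNormedModule)). intros; apply continuity_pt_filterlim; auto. }
  assert (ext : forall x, Rmin a b < x < Rmax a b -> k x = h x).
  { rewrite Rmin_left, Rmax_right by lra. intros; apply kh; lra. }
  assert (WP : wderiv (fun u => RInt k a u) h a b).
  { intros t Ht eps Heps. destruct (dpl_w _ _ _ (prim_deriv k a kc t) eps Heps) as [d [Hd0 K]].
    exists d; split; auto. intros s Hs Hst. rewrite <- (kh t Ht). apply K; auto. }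
  pose proof (wderiv_minus _ _ _ _ a b WP Hd) as W.
  assert (E : RInt k a b - G b = RInt k a a - G a).
  { apply (zero_deriv (fun u => RInt k a u - G u) a b Hab).
    intros t Ht eps Heps. destruct (W t Ht eps Heps) as [d [Hd0 K]]. exists d; split; auto.
    intros s Hs Hst. specialize (K s Hs Hst). replace ((h t - h t) * (s - t)) with 0 in K by ring.
    rewrite Rminus_0_r in K. auto. }
  rewrite RInt_point in E. change (zero : R) with 0 in E.
  split. { eapply ex_RInt_ext; eauto. }
  rewrite <- (RInt_ext k h a b ext). lra.
Qed.

Lemma fin_delta (P : nat -> R -> Prop) :
  (forall n, exists d, d > 0 /\ P n d) ->
  (forall n d d', 0 < d' <= d -> P n d -> P n d') ->
  forall N, exists d, d > 0 /\ forall n, (n <= N)%nat -> P n d.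
Proof.
  intros H M N. induction N.
  - destruct (H 0%nat) as [d [Hd Pd]]. exists d; split; auto. intros n Hn.
    assert (n = 0%nat) by lia. subst; auto.
  - destruct IHN as [d1 [Hd1 P1]]. destruct (H (S N)) as [d2 [Hd2 P2]].
    exists (Rmin d1 d2). split. { apply Rmin_glb_lt; auto. }
    pose proof (Rmin_l d1 d2). pose proof (Rmin_r d1 d2).
    assert (0 < Rmin d1 d2) by (apply Rmin_glb_lt; auto).
    intros n Hn. destruct (Nat.eq_dec n (S N)) as [e|ne].
    + subst. apply (M _ d2). lra. auto.
    + apply (M _ d1). lra. apply P1. lia.
Qed.

Section Alg.
Variable E : FrechetSpace.

Lemma l_zero (l : E -> R) : Defs.is_linear E l -> l fs_zero = 0.
Proof.
  intros [Ha _]. pose proof (Ha fs_zero fs_zero) as K. rewrite fs_add_zero in K. lra.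
Qed.

Lemma l_sub (l : E -> R) x y : Defs.is_linear E l -> l (fs_sub x y) = l x - l y.
Proof.
  intros L. pose proof (l_zero l L) as Z. destruct L as [Ha _]. unfold fs_sub.
  rewrite Ha. pose proof (Ha x (fs_opp x)) as K. rewrite fs_add_opp, Z in K.
  pose proof (Ha y (fs_opp y)) as K2. rewrite fs_add_opp, Z in K2. lra.
Qed.

Lemma scal0 (e : E) : fs_scal 0 e = fs_zero.
Proof.
  set (z := fs_scal 0 e).
  assert (zz : fs_add z z = z).
  { unfold z. rewrite <- fs_scal_distr_r. rewrite Rplus_0_r. reflexivity. }
  transitivity (fs_add (fs_add z z) (fs_opp z)).
  - rewrite <- fs_add_assoc, fs_add_opp, fs_add_zero. reflexivity.
  - rewrite zz, fs_add_opp. reflexivity.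
Qed.

Lemma opp_uniq (z w : E) : fs_add z w = fs_zero -> fs_opp z = w.
Proof.
  intro H. rewrite <- (fs_add_zero E (fs_opp z)). rewrite <- H.
  rewrite fs_add_assoc. rewrite (fs_add_comm E (fs_opp z) z), fs_add_opp.
  rewrite fs_add_comm, fs_add_zero. reflexivity.
Qed.

Lemma scal_sub (x y : R) (e : E) : fs_sub (fs_scal x e) (fs_scal y e) = fs_scal (x - y) e.
Proof.
  unfold fs_sub. rewrite (opp_uniq (fs_scal y e) (fs_scal (- y) e)).
  - rewrite <- fs_scal_distr_r. reflexivity.
  - rewrite <- fs_scal_distr_r. rewrite Rplus_opp_r. apply scal0.
Qed.
End Alg.

Lemma cont_wcont k a b : (forall x, continuity_pt k x) -> wcont k a b.
Proof.
  intros H t Ht eps Heps. destruct (H t eps Heps) as [d [Hd K]]. exists d; split; [lra|].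
  intros s Hs Hst. destruct (Req_dec s t) as [e|ne].
  { subst. replace (k t - k t) with 0 by ring. rewrite Rabs_R0; lra. }
  apply (K s). split. split; auto. exact I. simpl. unfold R_dist. auto.
Qed.

Lemma test_deriv (phi : R -> R) x l : derivable_pt_lim phi x l -> forall eps, eps > 0 ->
  exists d, d > 0 /\ forall s, s <> x -> Rabs (s - x) < d -> Rabs (/ (s - x) * (phi s - phi x) - l) < eps.
Proof.
  intros H eps Heps. destruct (H eps Heps) as [d Hd]. exists d; split; [apply cond_pos|].
  intros s ne Hs. pose proof (Hd (s - x) ltac:(lra) Hs) as K. replace (x + (s - x)) with s in K by ring.
  replace (/ (s - x) * (phi s - phi x)) with ((phi s - phi x) / (s - x)) by (field; lra). auto.
Qed.

Lemma small_mul (u q eps : R) : 0 <= q -> eps > 0 -> Rabs u < eps / (q + 1) -> Rabs u * q < eps.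
Proof.
  intros Hq He Hu. pose proof (Rabs_pos u).
  assert (Rabs u * (q + 1) < eps).
  { apply (Rmult_lt_compat_r (q+1)) in Hu; [|lra]. replace (eps / (q+1) * (q+1)) with eps in Hu by (field; lra). lra. }
  nra.
Qed.

Lemma dir1 (E : FrechetSpace) (a b : R) (f : R -> E -> R)
  (Hab : a < b)
  (Hdual : forall t, a <= t <= b -> in_dual E (f t))
  (Hcont : weak_star_continuous_on E f a b) :
  (forall mu mu' : R -> E, is_C1_on E mu mu' a b ->
     mu a = fs_zero -> mu b = fs_zero ->
     Rint (fun t => f t (mu' t)) a b = 0) ->
  (forall s t, a <= s <= b -> a <= t <= b -> forall e : E, f s e = f t e).
Proof.
  intros Htest s0 t0 Hs0 Ht0 e.
  set (g := fun u => f u e).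
  assert (Wg : wcont g a b) by (intros t Ht eps Heps; apply (Hcont e t Ht eps Heps)).
  set (gt := fun x => g (clamp a b x)).
  assert (gtc : forall x, continuity_pt gt x) by (apply wcont_clamp; auto; lra).
  assert (gtg : forall x, a <= x <= b -> gt x = g x) by (intros; unfold gt; rewrite clamp_id; auto).
  set (c := RInt gt a b / (b - a)).
  set (phi := fun u => RInt gt a u - c * (u - a)).
  assert (dphi : forall x, derivable_pt_lim phi x (gt x - c)).
  { intro x. unfold phi. replace (gt x - c) with (gt x - c * 1) by ring. apply derivable_pt_lim_minus.
    - apply prim_deriv; auto.
    - apply (derivable_pt_lim_scal (fun u => u - a)). 
      replace 1 with (1 - 0) by ring. apply derivable_pt_lim_minus.
      apply derivable_pt_lim_id. apply derivable_pt_lim_const. }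
  assert (cm : forall x, continuity_pt (fun u => gt u - c) x).
  { intro x. apply continuity_pt_minus; auto. apply continuity_pt_const. intros ? ?; reflexivity. }
  set (q n := fs_sn n e).
  assert (qp : forall n, 0 <= q n) by (intro; apply fs_sn_nonneg).
  assert (C1 : is_C1_on E (fun u => fs_scal (phi u) e) (fun u => fs_scal (gt u - c) e) a b).
  { split.
    - intros t1 Ht1 n eps Heps.
      destruct (test_deriv phi t1 _ (dphi t1) (eps / (q n + 1))) as [d [Hd K]].
      { apply Rdiv_lt_0_compat; auto. specialize (qp n); lra. }
      exists d; split; auto. intros s Hs ne Hst.
      rewrite scal_sub, fs_scal_assoc, scal_sub, fs_sn_homog.
      apply (small_mul _ (q n)); auto.
    - intros t1 Ht1 n eps Heps.
      destruct (cont_wcont _ a b (cm) t1 Ht1 (eps / (q n + 1))) as [d [Hd K]].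
      { apply Rdiv_lt_0_compat; auto. specialize (qp n); lra. }
      exists d; split; auto. intros s Hs Hst.
      rewrite scal_sub, fs_sn_homog. apply (small_mul _ (q n)); auto. }
  assert (phia : phi a = 0).
  { unfold phi. rewrite RInt_point. change (zero : R) with 0. ring. }
  assert (phib : phi b = 0).
  { unfold phi, c. field. lra. }
  pose proof (Htest _ _ C1 ltac:(simpl; rewrite phia; apply scal0) ltac:(simpl; rewrite phib; apply scal0)) as T.
  simpl in T.
  assert (Rab : Rmin a b = a /\ Rmax a b = b) by (rewrite Rmin_left, Rmax_right; lra).
  destruct Rab as [Rm RM].
  set (k1 := fun x => (gt x - c) * gt x).
  assert (k1c : forall x, continuity_pt k1 x) by (intro; apply continuity_pt_mult; auto).
  assert (Ek1 : ex_RInt k1 a b).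
  { apply (ex_RInt_continuous (V:=R_CompleteNormedModule)). intros; apply continuity_pt_filterlim; auto. }
  assert (ext1 : forall x, Rmin a b < x < Rmax a b -> k1 x = f x (fs_scal (gt x - c) e)).
  { rewrite Rm, RM. intros x Hx. destruct (Hdual x ltac:(lra)) as [[_ Ls] _].
    rewrite Ls. unfold k1. rewrite (gtg x) by lra. reflexivity. }
  assert (I1 : RInt k1 a b = 0).
  { rewrite <- T. rewrite Rint_RInt by (eapply ex_RInt_ext; eauto). apply RInt_ext. auto. }
  set (k3 := fun x => c * (gt x - c)).
  assert (k3c : forall x, continuity_pt k3 x).
  { intro; apply continuity_pt_mult; auto. apply continuity_pt_const. intros ? ?; reflexivity. }
  assert (I3 : ex_RInt k3 a b /\ RInt k3 a b = c * phi b - c * phi a).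
  { apply (FTC k3 (fun u => c * phi u) a b Hab). apply cont_wcont; auto.
    intros t1 Ht1 eps Heps.
    destruct (dpl_w _ _ _ (derivable_pt_lim_scal phi c t1 _ (dphi t1)) eps Heps) as [d [Hd K]].
    exists d; split; auto. intros s _ Hst. exact (K s Hst). }
  rewrite phia, phib in I3. destruct I3 as [Ek3 I3].
  set (k2 := fun x => (gt x - c) * (gt x - c)).
  assert (k2c : forall x, continuity_pt k2 x) by (intro; apply continuity_pt_mult; auto).
  assert (Ek2 : forall u v, ex_RInt k2 u v).
  { intros u v. apply (ex_RInt_continuous (V:=R_CompleteNormedModule)). intros; apply continuity_pt_filterlim; auto. }
  assert (I2 : RInt k2 a b = 0).
  { pose proof (RInt_minus (V:=R_CompleteNormedModule) k1 k3 a b Ek1 Ek3) as M.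
    transitivity (RInt k1 a b - RInt k3 a b); [| rewrite I1, I3; lra].
    etransitivity; [|exact M]. apply RInt_ext. intros x _. unfold k1, k2, k3, minus, plus, opp. simpl. ring. }
  set (Q := fun u => RInt k2 a u).
  assert (Q0 : forall x, a <= x <= b -> Q x = 0).
  { intros x Hx. unfold Q.
    assert (0 <= RInt k2 a x).
    { apply RInt_ge_0; [lra | apply Ek2 | intros; unfold k2; apply Rle_0_sqr]. }
    assert (0 <= RInt k2 x b).
    { apply RInt_ge_0; [lra | apply Ek2 | intros; unfold k2; apply Rle_0_sqr]. }
    pose proof (RInt_Chasles k2 a x b (Ek2 _ _) (Ek2 _ _)) as Ch.
    change (plus (RInt k2 a x) (RInt k2 x b)) with (RInt k2 a x + RInt k2 x b) in Ch.
    lra. }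
  assert (k20 : forall x, a <= x <= b -> k2 x = 0).
  { intros x Hx. destruct (Req_dec (k2 x) 0) as [z|nz]; auto. exfalso.
    assert (kp : k2 x > 0) by (pose proof (Rle_0_sqr (gt x - c)); unfold Rsqr in *; unfold k2 in *; lra).
    destruct (dpl_w _ _ _ (prim_deriv k2 a k2c x) (k2 x / 2) ltac:(lra)) as [d [Hd K]].
    assert (Hs : exists s, a <= s <= b /\ s <> x /\ Rabs (s - x) < d).
    { destruct (Rlt_le_dec x b).
      - exists (Rmin b (x + d/2)). unfold Rmin; destruct Rle_dec; repeat split; try lra;
          unfold Rabs; destruct Rcase_abs; lra.
      - exists (Rmax a (x - d/2)). unfold Rmax; destruct Rle_dec; repeat split; try lra;
          unfold Rabs; destruct Rcase_abs; lra. }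
    destruct Hs as [s [Hs [ne Hsx]]]. specialize (K s Hsx).
    change (RInt k2 a s) with (Q s) in K. change (RInt k2 a x) with (Q x) in K.
    rewrite (Q0 s Hs), (Q0 x Hx) in K.
    replace (0 - 0 - k2 x * (s - x)) with (- (k2 x * (s - x))) in K by ring.
    rewrite Rabs_Ropp, Rabs_mult, (Rabs_right (k2 x)) in K by lra.
    assert (Rabs (s - x) > 0) by (apply Rabs_pos_lt; lra). nra. }
  assert (gc : forall x, a <= x <= b -> g x = c).
  { intros x Hx. pose proof (k20 x Hx) as K. unfold k2 in K. rewrite (gtg x Hx) in K. nra. }
  change (g s0 = g t0). rewrite (gc s0), (gc t0); auto.
Qed.

Lemma dir2 (E : FrechetSpace) (a b : R) (f : R -> E -> R)
  (Hab : a < b)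
  (Hdual : forall t, a <= t <= b -> in_dual E (f t))
  (Hcont : weak_star_continuous_on E f a b) :
  (forall s t, a <= s <= b -> a <= t <= b -> forall e : E, f s e = f t e) ->
  (forall mu mu' : R -> E, is_C1_on E mu mu' a b ->
     mu a = fs_zero -> mu b = fs_zero ->
     Rint (fun t => f t (mu' t)) a b = 0).
Proof.
  intros Hconst mu mu' [Hder Hmc] Ha Hb.
  assert (aa : a <= a <= b) by lra.
  set (l := f a). destruct (Hdual a aa) as [L Lc]. fold l in L, Lc.
  assert (hl : forall t, a <= t <= b -> f t (mu' t) = l (mu' t)) by (intros; apply Hconst; auto).
  assert (WC : wcont (fun t => f t (mu' t)) a b).
  { intros t Ht eps Heps. destruct (Lc (mu' t) eps Heps) as [N [dc [Hdc Kc]]].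
    destruct (fin_delta (fun n d => forall s, a <= s <= b -> Rabs (s - t) < d ->
                fs_sn n (fs_sub (mu' s) (mu' t)) < dc)) with (N := N) as [d [Hd K]].
    - intro n. apply (Hmc t Ht n dc Hdc).
    - intros n d d' Hd' P s Hs Hst. apply P; auto; lra.
    - exists d; split; auto. intros s Hs Hst. rewrite (hl s Hs), (hl t Ht).
      apply Kc. intros n Hn. apply K; auto. }
  assert (WD : wderiv (fun t => l (mu t)) (fun t => f t (mu' t)) a b).
  { intros t Ht eps Heps. destruct (Lc (mu' t) eps Heps) as [N [dc [Hdc Kc]]].
    destruct (fin_delta (fun n d => forall s, a <= s <= b -> s <> t -> Rabs (s - t) < d ->
                fs_sn n (fs_sub (fs_scal (/ (s - t)) (fs_sub (mu s) (mu t))) (mu' t)) < dc))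
       with (N := N) as [d [Hd K]].
    - intro n. apply (Hder t Ht n dc Hdc).
    - intros n d d' Hd' P s Hs Hne Hst. apply P; auto; lra.
    - exists d; split; auto. intros s Hs Hst. rewrite (hl t Ht).
      destruct (Req_dec s t) as [e|ne].
      { subst. replace (t - t) with 0 by ring. replace (l (mu t) - l (mu t) - l (mu' t) * 0) with 0 by ring.
        rewrite Rabs_R0. lra. }
      assert (KK : Rabs (l (fs_scal (/ (s - t)) (fs_sub (mu s) (mu t))) - l (mu' t)) < eps).
      { apply Kc. intros n Hn. apply K; auto. }
      destruct L as [La Ls]. rewrite Ls, (l_sub E l) in KK by (split; auto).
      replace (l (mu s) - l (mu t) - l (mu' t) * (s - t)) with
        ((s - t) * (/ (s - t) * (l (mu s) - l (mu t)) - l (mu' t))) by (field; lra).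
      rewrite Rabs_mult, Rmult_comm. apply Rmult_le_compat_r. apply Rabs_pos. lra. }
  destruct (FTC _ _ a b Hab WC WD) as [Ex Eq].
  rewrite Rint_RInt by auto. rewrite Eq, Ha, Hb. ring.
Qed.

Theorem lemma2 (E : FrechetSpace) (a b : R) (f : R -> E -> R)
  (Hab : a < b)
  (Hdual : forall t, a <= t <= b -> in_dual E (f t))
  (Hcont : weak_star_continuous_on E f a b) :
  (forall mu mu' : R -> E, is_C1_on E mu mu' a b ->
     mu a = fs_zero -> mu b = fs_zero ->
     Rint (fun t => f t (mu' t)) a b = 0)
  <->
  (forall s t, a <= s <= b -> a <= t <= b -> forall e : E, f s e = f t e).
Proof.
  split.
  - apply dir1; auto.
  - apply dir2; auto.
Qed.
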